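(* Let $c\ge 1$, $\gamma>0$, and $\mathbf{T} = \begin{pmatrix}1\\ c\end{pmatrix}\in\mathbb{R}^{2\times 1}$. Define $H:\mathbb{R}\rightrightarrows\mathbb{R}$ by $y\in H(x)$ if and only if $x = \mathbf{T}^{\dagger}S_\gamma\mathbf{T}(x+y)$. Then for $x\ge 0$, $$H(x) = \begin{cases} \gamma\,[-\tfrac1c,\tfrac1c], & x=0,\\ \{\tfrac{\gamma}{c}+\tfrac{x}{c^2}\}, & x\in\big(0,\tfrac{\gamma(c-1)c}{c^2+1}\big],\\ \{\gamma\,\tfrac{1+c}{1+c^2}\}, & x>\tfrac{\gamma(c-1)c}{c^2+1},\end{cases}$$ and $H(x) = -H(-x)$ for $x<0$. Moreover, $H$ is the subdifferential of the even function $\Phi:\mathbb{R}\to\mathbb{R}$ given by $$\Phi(x) = \begin{cases} \tfrac{\gamma x}{c} + \tfrac{x^2}{2c^2}, & x\in\big[0,\tfrac{\gamma(c-1)c}{c^2+1}\big],\\ \gamma\,\tfrac{1+c}{1+c^2}\,x - \tfrac{\gamma^2(c-1)^2}{2(c^2+1)^2}, & x>\tfrac{\gamma(c-1)c}{c^2+1},\\ \Phi(-x), & x<0.\end{cases}$$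
   Context: $\mathbf{T}^{\dagger} = \frac{1}{1+c^2}(1,c)$ is the Moore–Penrose inverse of $\mathbf{T}$. $S_\gamma:\mathbb{R}^2\to\mathbb{R}^2$ is componentwise soft shrinkage: $[S_\gamma(\mathbf{y})]_j = y_j-\gamma$ if $y_j\ge\gamma$, $y_j+\gamma$ if $y_j\le-\gamma$, $0$ if $|y_j|<\gamma$. The subdifferential of a convex $\Phi$ is $\partial\Phi(x)=\{y: y(\tilde x - x)\le \Phi(\tilde x)-\Phi(x)\ \forall \tilde x\in\mathbb{R}\}$. *)

(* Defs.v *)
From Stdlib Require Import Reals.
Open Scope R_scope.

Definition soft (g y : R) : R :=
  if Rle_dec g y then y - g
  else if Rle_dec y (- g) then y + g
  else 0.

Definition Tmap (c x : R) : R * R := (x, c * x).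

Definition S2 (g : R) (v : R * R) : R * R := (soft g (fst v), soft g (snd v)).

(* Moore-Penrose inverse T^dagger = 1/(1+c^2) (1, c) : R^2 -> R *)
Definition Tdag (c : R) (v : R * R) : R := / (1 + c ^ 2) * (fst v + c * snd v).

Definition Hrel (c g x y : R) : Prop := x = Tdag c (S2 g (Tmap c (x + y))).

Definition thr (c g : R) : R := g * (c - 1) * c / (c ^ 2 + 1).

Definition Hpos (c g x y : R) : Prop :=
  (x = 0 /\ g * (- / c) <= y <= g * (/ c)) \/
  (0 < x <= thr c g /\ y = g / c + x / c ^ 2) \/
  (thr c g < x /\ y = g * ((1 + c) / (1 + c ^ 2))).

Definition Phi_pos (c g x : R) : R :=
  if Rle_dec x (thr c g) then g * x / c + x ^ 2 / (2 * c ^ 2)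
  else g * ((1 + c) / (1 + c ^ 2)) * x
       - g ^ 2 * (c - 1) ^ 2 / (2 * (c ^ 2 + 1) ^ 2).

Definition Phi (c g x : R) : R :=
  if Rle_dec 0 x then Phi_pos c g x else Phi_pos c g (- x).

Definition subdiff (F : R -> R) (x y : R) : Prop :=
  forall xt : R, y * (xt - x) <= F xt - F x.

(* Main.v *)
Require Import Defs.
From Stdlib Require Import Reals Lra Psatz.
Open Scope R_scope.


Lemma soft_odd g v : 0 < g -> soft g (- v) = - soft g v.
Proof. intros hg; unfold soft;
  repeat (destruct Rle_dec); lra. Qed.

Lemma hrel_eq c g x y : 1 <= c ->
  Hrel c g x y <-> x * (1 + c^2) = soft g (x+y) + c * soft g (c*(x+y)).
Proof.
  intros hc; unfold Hrel, Tdag, S2, Tmap; cbn [fst snd].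
  assert (h : 0 < 1 + c^2) by nra.
  split; intros H.
  - rewrite H at 1. field. nra.
  - apply (Rmult_eq_reg_r (1 + c^2)); [|lra]. rewrite H. field. nra.
Qed.

Definition Hp (c g x y : R) : Prop :=
  (x = 0 /\ -g <= c*y <= g) \/
  (0 < x /\ x*(c^2+1) <= g*(c-1)*c /\ y*c^2 = g*c + x) \/
  (g*(c-1)*c < x*(c^2+1) /\ y*(1+c^2) = g*(1+c)).

Lemma Hpos_Hp c g x y : 1 <= c -> 0 < g -> (Hpos c g x y <-> Hp c g x y).
Proof.
  intros hc hg. unfold Hpos, Hp, thr.
  assert (hc0 : 0 < c) by lra.
  assert (h1 : 0 < c^2 + 1) by nra.
  assert (e1 : forall u, g * (- / c) <= u <-> - g <= c * u).
  { intros u. split; intros H.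
    - apply Rmult_le_compat_l with (r := c) in H; [|lra].
      replace (c * (g * - / c)) with (-g) in H by (field; lra). lra.
    - apply Rmult_le_reg_l with (r := c); [lra|].
      replace (c * (g * - / c)) with (-g) by (field; lra). lra. }
  assert (e2 : forall u, u <= g * / c <-> c * u <= g).
  { intros u. split; intros H.
    - apply Rmult_le_compat_l with (r := c) in H; [|lra].
      replace (c * (g * / c)) with g in H by (field; lra). lra.
    - apply Rmult_le_reg_l with (r := c); [lra|].
      replace (c * (g * / c)) with g by (field; lra). lra. }
  assert (e3 : forall u, u <= g * (c - 1) * c / (c ^ 2 + 1) <-> u*(c^2+1) <= g*(c-1)*c).
  { intros u. split; intros H.
    - apply Rmult_le_compat_r with (r := c^2+1) in H; [|lra].
      replace (g * (c - 1) * c / (c ^ 2 + 1) * (c^2+1)) with (g*(c-1)*c) in H by (field; lra). lra.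
    - apply Rmult_le_reg_r with (r := c^2+1); [lra|].
      replace (g * (c - 1) * c / (c ^ 2 + 1) * (c^2+1)) with (g*(c-1)*c) by (field; lra). lra. }
  assert (e4 : forall u, g * (c - 1) * c / (c ^ 2 + 1) < u <-> g*(c-1)*c < u*(c^2+1)).
  { intros u. split; intros H.
    - destruct (Rlt_le_dec (g*(c-1)*c) (u*(c^2+1))) as [?|H']; auto.
      apply e3 in H'. lra.
    - destruct (Rlt_le_dec (g * (c - 1) * c / (c ^ 2 + 1)) u) as [?|H']; auto.
      apply e3 in H'. lra. }
  assert (e5 : forall u, u = g / c + x / c^2 <-> u * c^2 = g*c + x).
  { intros u; split; intros H.
    - rewrite H. field. lra.
    - apply (Rmult_eq_reg_r (c^2)); [|nra]. rewrite H. field. lra. }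
  assert (e6 : forall u, u = g * ((1 + c) / (1 + c^2)) <-> u * (1+c^2) = g*(1+c)).
  { intros u; split; intros H.
    - rewrite H. field. nra.
    - apply (Rmult_eq_reg_r (1+c^2)); [|nra]. rewrite H. field. nra. }
  rewrite e1, e2, e3, e4, e5, e6. tauto.
Qed.

Lemma hrel_hp c g x y : 1 <= c -> 0 < g -> 0 <= x ->
  (x * (1 + c^2) = soft g (x+y) + c * soft g (c*(x+y)) <-> Hp c g x y).
Proof.
  intros hc hg hx. unfold Hp.
  set (z := x + y). replace y with (z - x) by (unfold z; ring).
  clearbody z.
  unfold soft.
  split.
  - intros H.
    destruct (Rle_dec g z); destruct (Rle_dec g (c*z)); try destruct (Rle_dec z (-g));
      try destruct (Rle_dec (c*z) (-g)).
    all: try (exfalso; nra).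
    all: destruct (Req_dec x 0) as [hx0|hx0];
      [| destruct (Rle_dec (x*(c^2+1)) (g*(c-1)*c)) as [ht|ht]].
    all: first [ (left; split; [assumption| split; nra])
               | (right; left; split; [lra|split; [assumption|nra]])
               | (right; right; split; nra)
               | (exfalso; nra)
               | idtac "FAIL" ].
  - intros [[h1 h2]|[[h1 [h2 h3]]|[h1 h2]]].
    all: destruct (Rle_dec g z); destruct (Rle_dec g (c*z)); try destruct (Rle_dec z (-g));
      try destruct (Rle_dec (c*z) (-g)).
    all: first [nra | (exfalso; nra) | (assert ((z-g)*c^2 <= 0) by nra; assert (z <= g) by (destruct (Rle_dec z g); [auto| exfalso; assert (0 < (z-g)*c^2) by (apply Rmult_lt_0_compat; nra); lra]); assert (z = g) by lra; subst z; nra) | idtac "FAIL"].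
Qed.

Definition Fe (f : R -> R) (x : R) : R := if Rle_dec 0 x then f x else f (- x).

Lemma lim0 e A d : 0 <= A -> 0 < d -> (forall s, 0 < s < d -> e * s <= A * s^2) -> e <= 0.
Proof.
  intros hA hd H. destruct (Rle_dec e 0) as [|he]; auto. exfalso.
  set (s := Rmin (d/2) (e / (2*(A+1)))).
  assert (hs1 : s <= d/2) by apply Rmin_l.
  assert (hs2 : s <= e / (2*(A+1))) by apply Rmin_r.
  assert (hs0 : 0 < s).
  { unfold s, Rmin; destruct Rle_dec; [lra|]. apply Rdiv_lt_0_compat; lra. }
  assert (hs3 : s * (2*(A+1)) <= e).
  { apply Rmult_le_compat_r with (r := 2*(A+1)) in hs2; [|lra].
    replace (e / (2 * (A + 1)) * (2 * (A + 1))) with e in hs2 by (field; lra). lra. }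
  specialize (H s ltac:(lra)).
  assert (e <= A * s) by nra. nra.
Qed.

Lemma le_by A B C : B - A = C -> 0 <= C -> A <= B.
Proof. intros; lra. Qed.

Section Conv.
Variables (f : R -> R) (m b T : R).
Hypothesis hm : 0 < m.
Hypothesis hb : 0 < b.
Hypothesis hT : 0 <= T.
Hypothesis Hf1 : forall x, 0 <= x <= T -> f x = m*x + b*x^2/2.
Hypothesis Hf2 : forall x, T < x -> f x = (m+b*T)*x - b*T^2/2.

Lemma f0 : f 0 = 0.
Proof. rewrite Hf1; lra. Qed.

Lemma L1 x t : 0 <= x <= T -> 0 <= t -> f x + (m+b*x)*(t-x) <= f t.
Proof. intros hx ht.
  assert (0 <= b*(t-x)^2) by (apply Rmult_le_pos; [lra | apply pow2_ge_0]).
  destruct (Rle_dec t T).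
  - rewrite !Hf1 by lra. apply (le_by _ _ (b*(t-x)^2/2)); [field|lra].
  - rewrite (Hf1 x) by lra. rewrite (Hf2 t) by lra.
    assert (0 <= (T-x)*(t - (T+x)/2)) by (apply Rmult_le_pos; lra).
    apply (le_by _ _ (b*((T-x)*(t - (T+x)/2)))); [field|apply Rmult_le_pos; lra]. Qed.

Lemma L2 x t : T < x -> 0 <= t -> f x + (m+b*T)*(t-x) <= f t.
Proof. intros hx ht.
  assert (0 <= b*(t-T)^2) by (apply Rmult_le_pos; [lra | apply pow2_ge_0]).
  destruct (Rle_dec t T).
  - rewrite (Hf1 t) by lra. rewrite (Hf2 x) by lra.
    apply (le_by _ _ (b*(t-T)^2/2)); [field|lra].
  - rewrite !Hf2 by lra. apply (le_by _ _ 0); [field|lra]. Qed.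

Lemma U1 x t : 0 <= x <= T -> 0 <= t -> f t <= f x + (m+b*x)*(t-x) + b*(t-x)^2/2.
Proof. intros hx ht.
  assert (0 <= b*(t-T)^2) by (apply Rmult_le_pos; [lra | apply pow2_ge_0]).
  destruct (Rle_dec t T).
  - rewrite !Hf1 by lra. apply (le_by _ _ 0); [field|lra].
  - rewrite (Hf1 x) by lra. rewrite (Hf2 t) by lra.
    apply (le_by _ _ (b*(t-T)^2/2)); [field|lra]. Qed.

Lemma U2 x t : T < x -> 0 <= t -> f t <= f x + (m+b*T)*(t-x) + b*(t-x)^2/2.
Proof. intros hx ht.
  destruct (Rle_dec t T).
  - rewrite (Hf1 t) by lra. rewrite (Hf2 x) by lra.
    assert (0 <= (x-T)*(x+T-2*t)) by (apply Rmult_le_pos; lra).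
    apply (le_by _ _ (b*((x-T)*(x+T-2*t))/2)); [field|].
    assert (0 <= b*((x-T)*(x+T-2*t))) by (apply Rmult_le_pos; lra). lra.
  - rewrite !Hf2 by lra. apply (le_by _ _ (b*(t-x)^2/2)); [field|].
    assert (0 <= b*(t-x)^2) by (apply Rmult_le_pos; [lra | apply pow2_ge_0]). lra. Qed.

Lemma R1 x d y : 0 <= x -> (forall t, 0 <= t -> f t <= f x + d*(t-x) + b*(t-x)^2/2) ->
  subdiff (Fe f) x y -> y <= d.
Proof.
  intros hx HU H.
  assert (y - d <= 0); [|lra].
  apply (lim0 _ (b/2) 1); [lra|lra|].
  intros s hs. specialize (H (x+s)). specialize (HU (x+s) ltac:(lra)).
  unfold Fe in H. destruct (Rle_dec 0 (x+s)); [|lra]. destruct (Rle_dec 0 x); [|lra].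
  replace (x+s-x) with s in * by ring. nra.
Qed.

Lemma R2 x d y : 0 < x -> (forall t, 0 <= t -> f t <= f x + d*(t-x) + b*(t-x)^2/2) ->
  subdiff (Fe f) x y -> d <= y.
Proof.
  intros hx HU H.
  assert (d - y <= 0); [|lra].
  apply (lim0 _ (b/2) x); [lra|lra|].
  intros s hs. specialize (H (x-s)). specialize (HU (x-s) ltac:(lra)).
  unfold Fe in H. destruct (Rle_dec 0 (x-s)); [|lra]. destruct (Rle_dec 0 x); [|lra].
  replace (x-s-x) with (-s) in * by ring. nra.
Qed.

Lemma R0 y : subdiff (Fe f) 0 y -> - m <= y.
Proof.
  intros H.
  assert (- m - y <= 0); [|lra].
  apply (lim0 _ (b/2) 1); [lra|lra|].
  intros s hs. specialize (H (-s)).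
  pose proof (U1 0 s ltac:(lra) ltac:(lra)) as HU.
  unfold Fe in H. destruct (Rle_dec 0 (-s)); [lra|]. destruct (Rle_dec 0 0); [|lra].
  rewrite f0 in *. replace (- - s) with s in H by ring. nra.
Qed.

Definition Qx x y := (x = 0 /\ -m <= y <= m) \/ (0 < x <= T /\ y = m + b*x) \/ (T < x /\ y = m + b*T).

Lemma conv_main x y : 0 <= x -> (Qx x y <-> subdiff (Fe f) x y).
Proof.
  intros hx. split.
  - intros HQ xt. unfold Fe. destruct (Rle_dec 0 x); [|lra].
    pose proof f0 as h0.
    unfold Qx in HQ; destruct HQ as [HQ|[HQ|HQ]]; [destruct HQ as [-> hy]|destruct HQ as [[hx1 hx2] ->]|destruct HQ as [hx1 ->]]; destruct (Rle_dec 0 xt).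
    + pose proof (L1 0 xt ltac:(lra) ltac:(lra)). nra.
    + pose proof (L1 0 (-xt) ltac:(lra) ltac:(lra)). nra.
    + pose proof (L1 x xt ltac:(lra) ltac:(lra)). nra.
    + pose proof (L1 0 (-xt) ltac:(lra) ltac:(lra)).
      pose proof (L1 x 0 ltac:(lra) ltac:(lra)). assert (0 <= (m+b*x)*(-xt)) by (apply Rmult_le_pos; nra). nra.
    + pose proof (L2 x xt ltac:(lra) ltac:(lra)). nra.
    + pose proof (L1 0 (-xt) ltac:(lra) ltac:(lra)).
      pose proof (L2 x 0 ltac:(lra) ltac:(lra)). assert (0 <= (m+b*T)*(-xt)) by (apply Rmult_le_pos; nra). nra.
  - intros H. unfold Qx. destruct (Req_dec x 0) as [->|hx0].
    + left. split; auto. split.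
      * apply R0; auto.
      * replace m with (m + b*0) by ring. apply (R1 0); auto; intros; apply U1; lra.
    + destruct (Rle_dec x T).
      * right; left. split; [lra|]. apply Rle_antisym.
        -- apply (R1 x); auto; intros; apply U1; lra.
        -- apply (R2 x); [lra| |auto]; intros; apply U1; lra.
      * right; right. split; [lra|]. apply Rle_antisym.
        -- apply (R1 x); auto; intros; apply U2; lra.
        -- apply (R2 x); [lra| |auto]; intros; apply U2; lra.
Qed.
End Conv.

Lemma hrel_odd c g x y : 1 <= c -> 0 < g -> (Hrel c g x y <-> Hrel c g (-x) (-y)).
Proof.
  intros hc hg. rewrite !hrel_eq by auto.
  replace (-x + -y) with (-(x+y)) by ring.
  replace (c * - (x+y)) with (-(c*(x+y))) by ring.
  rewrite !soft_odd by auto. split; intros; lra.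
Qed.

Lemma Phi_even c g x : Phi c g (- x) = Phi c g x.
Proof.
  unfold Phi. rewrite Ropp_involutive.
  destruct (Rle_dec 0 (-x)); destruct (Rle_dec 0 x); auto.
  - assert (x = 0) by lra. subst x. rewrite Ropp_0. auto.
  - lra.
Qed.

Lemma subdiff_neg F x y : (forall t, F (-t) = F t) -> subdiff F x y -> subdiff F (-x) (-y).
Proof.
  intros HF H xt. specialize (H (-xt)). rewrite HF in H. rewrite HF. nra.
Qed.

Lemma Phi_Fe c g x : Phi c g x = Fe (Phi_pos c g) x.
Proof. reflexivity. Qed.

Theorem lemma2p1 (c g : R) (hc : 1 <= c) (hg : 0 < g) :
  (forall x y : R, 0 <= x -> (Hrel c g x y <-> Hpos c g x y)) /\
  (forall x y : R, x < 0 -> (Hrel c g x y <-> Hrel c g (- x) (- y))) /\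
  (forall x : R, Phi c g (- x) = Phi c g x) /\
  (forall x y : R, Hrel c g x y <-> subdiff (Phi c g) x y).
Proof.
  assert (hc0 : 0 < c) by lra.
  assert (hc2 : 0 < c^2) by nra.
  assert (hm : 0 < g / c) by (apply Rdiv_lt_0_compat; lra).
  assert (hb : 0 < / c^2) by (apply Rinv_0_lt_compat; lra).
  assert (hT : 0 <= thr c g).
  { unfold thr. apply Rmult_le_pos; [|left; apply Rinv_0_lt_compat; nra].
    apply Rmult_le_pos; [|lra]. apply Rmult_le_pos; lra. }
  assert (Hf1 : forall x, 0 <= x <= thr c g -> Phi_pos c g x = g/c*x + /c^2*x^2/2).
  { intros x hx. unfold Phi_pos. destruct Rle_dec; [|lra]. field. lra. }
  assert (Hf2 : forall x, thr c g < x -> Phi_pos c g x = (g/c + /c^2*thr c g)*x - /c^2*(thr c g)^2/2).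
  { intros x hx. unfold Phi_pos. destruct Rle_dec; [lra|]. unfold thr. field. split; nra. }
  assert (P1 : forall x y, 0 <= x -> (Hrel c g x y <-> Hpos c g x y)).
  { intros x y hx. rewrite hrel_eq, hrel_hp, Hpos_Hp by auto. tauto. }
  assert (HQ : forall x y, Hpos c g x y <-> Qx (g/c) (/c^2) (thr c g) x y).
  { intros x y. unfold Hpos, Qx.
    replace (g * - / c) with (- (g/c)) by (field; lra).
    replace (g * / c) with (g/c) by (field; lra).
    replace (g / c + x / c ^ 2) with (g/c + /c^2*x) by (field; lra).
    replace (g * ((1 + c) / (1 + c ^ 2))) with (g/c + /c^2*thr c g) by (unfold thr; field; split; nra).
    tauto. }
  assert (P4 : forall x y, 0 <= x -> (Hrel c g x y <-> subdiff (Phi c g) x y)).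
  { intros x y hx. rewrite P1, HQ by auto.
    change (subdiff (Phi c g) x y) with (subdiff (Fe (Phi_pos c g)) x y).
    apply conv_main; auto. }
  split; [exact P1|]. split; [intros; apply hrel_odd; auto|].
  split; [apply Phi_even|].
  intros x y. destruct (Rle_dec 0 x) as [hx|hx]; [apply P4; auto|].
  rewrite hrel_odd by auto. rewrite P4 by lra. split; intros H.
  - rewrite <- (Ropp_involutive x), <- (Ropp_involutive y).
    apply subdiff_neg; [apply Phi_even|auto].
  - apply subdiff_neg; [apply Phi_even|auto].
Qed.
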